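(* For each $n\ge1$ let $\mathrm T_n=(T_n,\mathrm D_n)$ be a random labeled multitype plane tree with valid law $\nu_n$, and let $\mathrm T_n^{\mathrm{sym}}=(T_n^{\mathrm{sym}},\mathrm D_n^{\mathrm{sym}})$ have law $\nu_n^{\mathrm{sym}}$. Fix a type $q\in S$. If there exists a $C([0,1],\mathbb R)$-valued random process $\Lambda^{(q)}$ such that $|V(T_n^{\mathrm{sym}})|^{-1}\Lambda^{(q)}_{T_n^{\mathrm{sym}}}\to\Lambda^{(q)}$ in distribution, then also $|V(T_n)|^{-1}\Lambda^{(q)}_{T_n}\to\Lambda^{(q)}$ in distribution.
   Context: Plane trees are rooted, encoded by Ulam–Harris words, with vertex types $s(v)$ in a countable set $S$; a labeled tree $(t,\mathrm d)$ has real displacements on edges. $P_t$ is the set of vectors of permutations of the children of each vertex; $\sigma(t,\mathrm d)$ reorders children accordingly with displacements following edges; the symmetrization of a random labeled tree is $\sigma(T,\mathrm D)$ with $\sigma$ uniform on $P_T$ given the tree, and $\nu^{\mathrm{sym}}$ is its law. A law $\nu$ is valid if (i) the law of the unlabeled tree is invariant under all $\sigma\in P_t$, (ii) the child-displacement vectors $D_v=(D_{v,v1},\dots,D_{v,vk(v)})$ are conditionally independent given $T$, (iii) the conditional law of $D_v$ depends only on the type of $v$ and the types of its children. The contour exploration $\theta:\{0,\dots,2|t|-2\}\to V(t)$ is the depth-first walk ($\theta(0)=\emptyset$; $\theta(i)$ is the lexicographically first unvisited child of $\theta(i-1)$, else its parent). For a tree $t$ with $n=|V(t)|$ vertices and $q\in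 S$, $\Lambda^{(q)}_t(i/(2n-2))=|\{0\le j<i: s(\theta(j))=q\}|$ for $0\le i\le 2n-2$, extended to $[0,1]$ by linear interpolation. Convergence in distribution is in $C([0,1],\mathbb R)$ with the uniform topology. *)

(* Defs.v *)
From HB Require Import structures.
From mathcomp Require Import all_boot all_order all_algebra all_fingroup.
From mathcomp Require Import all_classical all_reals all_analysis.
Set Implicit Arguments. Unset Strict Implicit. Unset Printing Implicit Defensive.
Import Order.TTheory GRing.Theory Num.Theory numFieldNormedType.Exports.
Local Open Scope classical_set_scope.
Local Open Scope ring_scope.

(* Plane trees with vertex types in S and edge labels in L.           *)
(* A node carries its type and the ordered list of its children, each *)
(* child together with the label (displacement) of the edge to it.    *)
(* Unlabeled trees: L = unit.  Labeled trees: L = R.                  *)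
(* Vertices are Ulam-Harris words (root-to-vertex child indices).     *)
Inductive ptree (S L : Type) : Type :=
  PNode : S -> seq (L * ptree S L) -> ptree S L.
Arguments PNode {S L}.

Section Trees.
Variables (S L : Type).

Definition root_type (t : ptree S L) : S := let: PNode s _ := t in s.

(* Ulam-Harris words of the vertices, root = [::], child i of v = v ++ [:: i] *)
Fixpoint vertices (t : ptree S L) : seq (seq nat) :=
  let: PNode _ cs := t in
  [::] :: (fix vs (i : nat) (cs : seq (L * ptree S L)) : seq (seq nat) :=
             match cs with
             | [::] => [::]
             | c :: cs' => [seq i :: w | w <- vertices c.2] ++ vs i.+1 cs'
             end) 0%N cs.

Definition nverts (t : ptree S L) : nat := size (vertices t).

Fixpoint subt (t : ptree S L) (w : seq nat) : option (ptree S L) :=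
  match w with
  | [::] => Some t
  | i :: w' => let: PNode _ cs := t in
               match drop i cs with
               | c :: _ => subt c.2 w'
               | [::] => None
               end
  end.

Definition kids (t : ptree S L) (v : seq nat) : nat :=
  if subt t v is Some (PNode _ cs) then size cs else 0%N.

Definition typ (t : ptree S L) (v : seq nat) : option S :=
  omap root_type (subt t v).

Definition child_types (t : ptree S L) (v : seq nat) : seq S :=
  if subt t v is Some (PNode _ cs) then [seq root_type c.2 | c <- cs] else [::].

(* contour exploration: list of types s(theta(0)), ..., s(theta(2n-2)) *)
Fixpoint contour (t : ptree S L) : seq S :=
  let: PNode s cs := t in
  s :: (fix cl (cs : seq (L * ptree S L)) : seq S :=
          match cs with
          | [::] => [::]
          | c :: cs' => contour c.2 ++ s :: cl cs'
          end) cs.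

Definition all_choices (A : Type) (ls : seq (seq A)) : seq (seq A) :=
  foldr (fun l acc => [seq x :: r | x <- l, r <- acc]) [:: [::]] ls.

Definition permute (A : Type) (k : nat) (p : {perm 'I_k}) (ys : seq A) : seq A :=
  if ys is y0 :: _ then [seq nth y0 ys (p i) | i <- enum 'I_k] else [::].

(* The list (with multiplicity) of all sigma(t) for sigma in P_t:        *)
(* one permutation of the children at each vertex, the edge labels       *)
(* following their edges.  Its size is |P_t| = prod_v k(v)!.            *)
Fixpoint sym_list (t : ptree S L) : seq (ptree S L) :=
  let: PNode s cs := t in
  let k := size cs in
  [seq PNode s (permute p ys)
  | p <- enum {perm 'I_k},
    ys <- all_choices
            ((fix sl (cs : seq (L * ptree S L)) : seq (seq (L * ptree S L)) :=
                match cs with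
                | [::] => [::]
                | c :: cs' => [seq (c.1, y) | y <- sym_list c.2] :: sl cs'
                end) cs)].

End Trees.

Fixpoint shape (S L : Type) (t : ptree S L) : ptree S unit :=
  let: PNode s cs := t in
  PNode s ((fix sh (cs : seq (L * ptree S L)) : seq (unit * ptree S unit) :=
             match cs with
             | [::] => [::]
             | c :: cs' => (tt, shape c.2) :: sh cs'
             end) cs).

Section Labeled.
Variable R : realType.

(* displacement D_{v,vi} of the edge from v to its i-th child (0-indexed) *)
Definition disp (S : Type) (x : ptree S R) (v : seq nat) (i : nat) : R :=
  if subt x v is Some (PNode _ cs) then nth 0 [seq c.1 | c <- cs] i else 0.

Definition clamp01 (y : R) : R := Num.min 1 (Num.max 0 y).

(* Lambda^{(q)}_t : the number of j < i with s(theta(j)) = q at i/(2n-2), *)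
(* linearly interpolated on [0,1].                                      *)
Definition Lambda (S : eqType) (L : Type) (q : S) (t : ptree S L) (x : R) : R :=
  let N := (2 * nverts t - 2)%N in
  \sum_(j < N) ((nth q (contour t) j == q)%:R * clamp01 (x * N%:R - j%:R)).

Definition scaledLambda (S : eqType) (L : Type) (q : S) (t : ptree S L) (x : R) : R :=
  (nverts t)%:R^-1 * Lambda q t x.

(* The generating events: shape = t and D_{v,vi} in B v i for all edges. *)
Definition Eset (S : Type) (t : ptree S unit) (B : seq nat -> nat -> set R)
  : set (ptree S R) :=
  [set y | shape y = t /\
           forall v, v \in vertices t -> forall i, (i < kids t v)%N -> B v i (disp y v i)].

Definition meas_family (B : seq nat -> nat -> set R) :=
  forall v i, measurable (B v i).

(* restrict a rectangle to the child-displacement vector D_v *)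
Definition Bonly (v : seq nat) (B : seq nat -> nat -> set R) : seq nat -> nat -> set R :=
  fun u i => if u == v then B v i else setT.

(* membership in a list, for a type without decidable equality *)
Fixpoint inseq (A : Type) (x : A) (s : seq A) : Prop :=
  if s is y :: s' then y = x \/ inseq x s' else False.

Section RandomTrees.
Context (S : Type) (d : measure_display) (T : measurableType d) (P : probability T R).

Definition pr (A : set T) : R := fine (P A).

Definition shapeEv (X : T -> ptree S R) (t : ptree S unit) : set T :=
  [set w | shape (X w) = t].

Definition random_ltree (X : T -> ptree S R) : Prop :=
  forall t B, meas_family B -> measurable (X @^-1` Eset t B).

Definition cpr (X : T -> ptree S R) (t : ptree S unit) (A : set T) : R :=
  pr A / pr (shapeEv X t).

Definition valid_law (X : T -> ptree S R) : Prop :=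
  random_ltree X /\
  (* (i) the law of the unlabeled tree is invariant under every sigma in P_t *)
  (forall (t t' : ptree S unit), inseq t' (sym_list t) ->
       P (shapeEv X t) = P (shapeEv X t')) /\
  (* (ii) the D_v, v in V(T), are conditionally independent given T *)
  (forall t, 0 < pr (shapeEv X t) -> forall B, meas_family B ->
       cpr X t (X @^-1` Eset t B) =
       \prod_(v <- vertices t) cpr X t (X @^-1` Eset t (Bonly v B))) /\
  (* (iii) the conditional law of D_v given T depends only on s(v) and the
     types of the children of v *)
  (forall t t' v v', 0 < pr (shapeEv X t) -> 0 < pr (shapeEv X t') ->
       v \in vertices t -> v' \in vertices t' ->
       typ t v = typ t' v' -> child_types t v = child_types t' v' ->
       forall B : nat -> set R, (forall i, measurable (B i)) ->
       cpr X t (X @^-1` Eset t (fun u i => if u == v then B i else setT)) =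
       cpr X t' (X @^-1` Eset t' (fun u i => if u == v' then B i else setT))).

End RandomTrees.

(* probability that sigma(x) lies in Eset t' B, sigma uniform on P_x *)
Definition sym_prob (S : Type) (x : ptree S R) (t' : ptree S unit)
    (B : seq nat -> nat -> set R) : R :=
  (\sum_(y <- sym_list x) \1_(Eset t' B) y) / (size (sym_list x))%:R.

(* Y (on (T', P')) has law nu^sym, where nu is the law of X (on (T, P)):  *)
(* P'(Y in A) = E[ P(sigma(X) in A | X) ], sigma uniform on P_X, for all   *)
(* generating events A (which determine the law).                        *)
Definition is_symmetrization (S : Type)
    (d : measure_display) (T : measurableType d) (P : probability T R)
    (X : T -> ptree S R)
    (d' : measure_display) (T' : measurableType d') (P' : probability T' R)
    (Y : T' -> ptree S R) : Prop :=
  random_ltree Y /\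
  forall t' B, meas_family B ->
    P' (Y @^-1` Eset t' B) = (\int[P]_w (sym_prob (X w) t' B)%:E)%E.

Definition C01 (f : R -> R) : Prop :=
  {within [set x : R | 0 <= x <= 1], continuous f}.

Definition C01_bounded (F : (R -> R) -> R) : Prop :=
  exists M : R, forall f, C01 f -> `|F f| <= M.

Definition C01_continuous (F : (R -> R) -> R) : Prop :=
  forall f, C01 f -> forall e : R, 0 < e -> exists2 delta : R, 0 < delta &
    forall g, C01 g -> (forall x, 0 <= x <= 1 -> `|f x - g x| <= delta) ->
      `|F f - F g| < e.

(* a C([0,1],R)-valued random process (Borel measurable for the uniform
   topology; on a metric space the Borel sigma-algebra is generated by the
   bounded continuous functions) *)
Definition C01_process (d : measure_display) (T : measurableType d)
    (L : T -> R -> R) : Prop :=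
  (forall w, C01 (L w)) /\
  forall F, C01_bounded F -> C01_continuous F -> measurable_fun setT (F \o L).

Definition cvg_dist (d : nat -> measure_display) (T : forall n, measurableType (d n))
    (P : forall n, probability (T n) R) (Z : forall n, T n -> R -> R)
    (d0 : measure_display) (T0 : measurableType d0) (P0 : probability T0 R)
    (L : T0 -> R -> R) : Prop :=
  forall F, C01_bounded F -> C01_continuous F ->
    ((fun n => \int[P n]_w (F (Z n w))%:E) @ \oo --> \int[P0]_w (F (L w))%:E)%E.

End Labeled.

(* Main.v *)
Require Import Defs.
From HB Require Import structures.
From mathcomp Require Import all_boot all_order all_algebra all_fingroup.
From mathcomp Require Import all_classical all_reals all_analysis.
From mathcomp Require Import measurable_realfun.
Import Order.TTheory GRing.Theory Num.Theory numFieldNormedType.Exports.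
Local Open Scope classical_set_scope.
Local Open Scope ring_scope.
Set Implicit Arguments. Unset Strict Implicit. Unset Printing Implicit Defensive.
Notation shape := (@Defs.shape _ _).
Section Ind.
Variables (S L : Type) (P : ptree S L -> Prop).
Hypothesis H : forall s cs, (forall c, inseq c cs -> P c.2) -> P (PNode s cs).
Fixpoint ptree_ind2 (t : ptree S L) : P t :=
  match t with PNode s cs => @H s cs
   ((fix F (cs : seq (L * ptree S L)) : forall c, inseq c cs -> P c.2 :=
     match cs with
     | [::] => fun c (hc : inseq c [::]) => False_ind _ hc
     | (l, t0) :: cs' => fun c hc =>
         match hc with
         | or_introl e => eq_ind (l, t0) (fun c => P c.2) (ptree_ind2 t0) c e
         | or_intror h => F cs' c h
         end
     end) cs) end.
End Ind.
Lemma map_ext_inseq (A B : Type) (f g : A -> B) (s : seq A) :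
  (forall c, inseq c s -> f c = g c) -> map f s = map g s.
Proof.
elim: s => //= a s IH H; rewrite (H a) ?IH //; first by move=> c hc; apply: H; right.
by left.
Qed.
Lemma inseq_in (A : eqType) (x : A) s : inseq x s <-> x \in s.
Proof.
elim: s => //= a s IH; rewrite in_cons; split.
  by case=> [->|/IH ->]; rewrite ?eqxx ?orbT.
by case/orP=> [/eqP ->|/IH]; [left|right].
Qed.
Lemma shape_PNode (S L : Type) s (cs : seq (L * ptree S L)) :
  shape (PNode s cs) = PNode s [seq (tt, shape c.2) | c <- cs].
Proof. by rewrite /=; congr PNode; elim: cs => //= c cs ->. Qed.
Lemma contour_PNode (S L : Type) s (cs : seq (L * ptree S L)) :
  contour (PNode s cs) = s :: flatten [seq contour c.2 ++ [:: s] | c <- cs].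
Proof. by rewrite /=; congr cons; elim: cs => //= c cs ->; rewrite -catA. Qed.
Lemma contour_shape (S L : Type) (x : ptree S L) : contour (shape x) = contour x.
Proof.
elim/ptree_ind2: x => s cs IH.
rewrite shape_PNode !contour_PNode; congr cons; congr flatten.
rewrite -map_comp; apply: map_ext_inseq => c /IH /= ->. done.
Qed.
Fixpoint vsl (S L : Type) (f : ptree S L -> seq (seq nat)) (i : nat) (cs : seq (L * ptree S L)) :=
  match cs with
  | [::] => [::]
  | c :: cs' => [seq i :: w | w <- f c.2] ++ vsl f i.+1 cs'
  end.
Lemma vertices_PNode (S L : Type) s (cs : seq (L * ptree S L)) :
  vertices (PNode s cs) = [::] :: vsl (@vertices S L) 0 cs.
Proof. by rewrite /=; congr cons; elim: cs 0%N => //= c cs IH i; rewrite IH. Qed.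
Lemma vertices_shape (S L : Type) (x : ptree S L) : vertices (shape x) = vertices x.
Proof.
elim/ptree_ind2: x => s cs IH.
rewrite shape_PNode !vertices_PNode; congr cons.
elim: cs 0%N IH => //= c cs IHc i IH.
rewrite IH /=; last by left.
by rewrite IHc // => c' h; apply: IH; right.
Qed.
Lemma nverts_shape (S L : Type) (x : ptree S L) : nverts (shape x) = nverts x.
Proof. by rewrite /nverts vertices_shape. Qed.
Lemma Lambda_shape (R : realType) (S : eqType) (L : Type) (q : S) (x : ptree S L) :
  @scaledLambda R S unit q (shape x) = scaledLambda q x.
Proof.
by apply/funext => y; rewrite /scaledLambda /Lambda nverts_shape contour_shape.
Qed.
Definition symF (S L : Type) (cs : seq (L * ptree S L)) :=
  [seq [seq (c.1, y) | y <- sym_list c.2] | c <- cs].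
Lemma sym_list_PNode (S L : Type) s (cs : seq (L * ptree S L)) :
  sym_list (PNode s cs) =
  [seq PNode s (permute p ys) | p <- enum {perm 'I_(size cs)}, ys <- all_choices (symF cs)].
Proof.
rewrite /=.
have -> : forall cs0, (fix sl (cs : seq (L * ptree S L)) : seq (seq (L * ptree S L)) :=
                match cs with
                | [::] => [::]
                | c :: cs' => [seq (c.1, y) | y <- sym_list c.2] :: sl cs'
                end) cs0 = symF cs0.
  by elim=> //= c cs0 ->.
by [].
Qed.
Lemma map_all_choices (A B : Type) (f : A -> B) (L : seq (seq A)) :
  map (map f) (all_choices L) = all_choices (map (map f) L).
Proof.
elim: L => //= l L <-.
by rewrite map_allpairs allpairs_mapl allpairs_mapr.
Qed.
Lemma nth_map_tot (A B : Type) (f : A -> B) (x0 : A) (s : seq A) n :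
  nth (f x0) (map f s) n = f (nth x0 s n).
Proof.
case: (ltnP n (size s)) => h; first exact: nth_map.
by rewrite !nth_default ?size_map.
Qed.
Lemma permute_map (A B : Type) (f : A -> B) k (p : {perm 'I_k}) ys :
  permute p (map f ys) = map f (permute p ys).
Proof.
case: ys => [|y0 ys] //; rewrite /permute.
transitivity [seq nth (f y0) (map f (y0 :: ys)) (p i) | i <- enum 'I_k]; first by [].
by rewrite -map_comp; apply: eq_map => i; exact: nth_map_tot.
Qed.
Lemma sym_list_shape (S L : Type) (x : ptree S L) :
  map shape (sym_list x) = sym_list (shape x).
Proof.
elim/ptree_ind2: x => s cs IH.
rewrite shape_PNode !sym_list_PNode map_allpairs.
set g := fun c : L * ptree S L => (tt, shape c.2).
have -> : symF [seq (tt, shape c.2) | c <- cs] = map (map g) (symF cs).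
  rewrite /symF -!map_comp; apply: map_ext_inseq => c hc /=.
  rewrite -(IH c hc) -!map_comp; apply: eq_map => y //.
rewrite -map_all_choices allpairs_mapr.
rewrite size_map; apply: eq_allpairs => p ys.
by rewrite shape_PNode permute_map.
Qed.
Section Enc.
Variable S : countType.
Fixpoint to_gt (t : ptree S unit) : GenTree.tree S :=
  let: PNode s cs := t in
  GenTree.Node 0 (GenTree.Leaf s :: map (fun c => let: (_, t0) := c in to_gt t0) cs).
Lemma to_gt_inj : injective to_gt.
Proof.
move=> t; elim/ptree_ind2: t => s cs IH [s' cs'] /= [-> E]; congr PNode.
elim: cs cs' E IH => [|[[] t0] cs IHc] [|[[] t0'] cs'] //= [/[swap] E].
move=> E0 IH.
have /= -> := IH (tt, t0) (or_introl erefl) t0' E0.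
by rewrite (IHc cs') // => c hc; apply: IH; right.
Qed.
HB.instance Definition _ := Equality.copy (ptree S unit) (inj_type to_gt_inj).
Definition enc (t : ptree S unit) : nat := pickle (to_gt t).
Lemma enc_inj : injective enc.
Proof. by move=> x y /(pcan_inj (@pickleK_inv _)) /to_gt_inj. Qed.
End Enc.
Lemma sumn_mul_eq (A : eqType) (l : seq A) z c :
  sumn [seq (x == z) * c | x <- l]%N = (count (pred1 z) l * c)%N.
Proof. by elim: l => //= x l ->; rewrite mulnDl. Qed.
Lemma count_all_choices (A : eqType) (L : seq (seq A)) (zs : seq A) x0 :
  count (pred1 zs) (all_choices L) =
  ((size zs == size L) * \prod_(i < size L) count (pred1 (nth x0 zs i)) (nth [::] L i))%N.
Proof.
elim: L zs => [|l L IH] zs.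
  by case: zs => //=; rewrite big_ord0.
rewrite /= count_flatten -map_comp.
case: zs => [|z zs].
  rewrite /= mul0n; elim: l => //= x l ->; rewrite addn0 count_map.
  by rewrite (eq_count (a2 := pred0)) ?count_pred0.
rewrite big_ord_recl /=.
have -> : [seq (count (pred1 (z :: zs)) \o (fun x : A => [seq x :: r | r <- all_choices L])) i | i <- l]
   = [seq (i == z) * count (pred1 zs) (all_choices L) | i <- l]%N.
  apply: eq_map => x /=; rewrite count_map.
  case: (eqVneq x z) => [->|ne] /=.
    by rewrite mul1n; apply: eq_count => r /=; rewrite eqseq_cons eqxx.
  rewrite mul0n (eq_count (a2 := pred0)) ?count_pred0 // => r /=.
  by rewrite eqseq_cons (negbTE ne).
rewrite sumn_mul_eq IH eqSS.
by case: (size zs == size L); rewrite ?mul0n ?muln0 // !mul1n.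
Qed.
Lemma size_all_choices_in (A : eqType) (L : seq (seq A)) ys :
  ys \in all_choices L -> size ys = size L.
Proof.
elim: L ys => [|l L IH] ys /=; first by rewrite inE => /eqP ->.
by case/allpairsP => -[x r] [_ /IH <- ->].
Qed.
Lemma size_all_choices (A : Type) (L : seq (seq A)) :
  size (all_choices L) = \prod_(l <- L) size l.
Proof. by elim: L => [|l L IH]; rewrite ?big_nil ?big_cons //= size_allpairs IH. Qed.
Lemma size_permute (A : Type) k (p : {perm 'I_k}) (ys : seq A) :
  size ys = k -> size (permute p ys) = k.
Proof.
case: ys => [|y0 ys] /= E; first by [].
by rewrite size_map size_enum_ord.
Qed.
Lemma nth_permute (A : Type) k (p : {perm 'I_k}) (ys : seq A) x (i : 'I_k) :
  size ys = k -> nth x (permute p ys) i = nth x ys (p i).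
Proof.
case: ys => [E|y0 ys E]; first by have := ltn_ord i; rewrite -{2}E.
rewrite /= (nth_map i) ?size_enum_ord // nth_ord_enum.
by apply: set_nth_default; rewrite E.
Qed.
Lemma permuteK (A : Type) k (p : {perm 'I_k}) (ys : seq A) :
  size ys = k -> permute (p^-1)%g (permute p ys) = ys.
Proof.
case: ys => [//|y0 ys] E.
apply: (@eq_from_nth _ y0); first by rewrite !size_permute.
move=> i; rewrite !size_permute // => ik.
rewrite (nth_permute _ _ (Ordinal ik)) ?size_permute // (nth_permute _ _ ((p^-1)%g (Ordinal ik))) //.
by rewrite permKV.
Qed.
Lemma permuteKV (A : Type) k (p : {perm 'I_k}) (ys : seq A) :
  size ys = k -> permute p (permute (p^-1)%g ys) = ys.
Proof. by move=> E; rewrite -{1}(invgK p) permuteK. Qed.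
Lemma permute_eq (A : eqType) k (p : {perm 'I_k}) (ys zs : seq A) :
  size ys = k ->
  (permute p ys == zs) = (size zs == k) && (ys == permute (p^-1)%g zs).
Proof.
move=> sy; apply/eqP/andP => [<-|[/eqP sz /eqP ->]].
  by rewrite size_permute // permuteK.
by rewrite permuteKV.
Qed.
Section Comb.
Variable S : countType.
Implicit Types t : ptree S unit.
Definition mm t t' := count (pred1 t') (sym_list t).
Definition sz t := size (sym_list t).
Lemma PNode_eq (s s' : S) (cs cs' : seq (unit * ptree S unit)) :
  (PNode s cs == PNode s' cs') = (s == s') && (cs == cs').
Proof. by apply/eqP/andP => [[-> ->]|[/eqP-> /eqP->]]. Qed.
Lemma count_pair_unit (u : unit) (L : seq (ptree S unit)) (z : unit * ptree S unit) :
  count (pred1 z) [seq (u, y) | y <- L] = count (pred1 z.2) L.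
Proof.
rewrite count_map; apply: eq_count => y /=; case: z => [[] z]; case: u.
by rewrite xpair_eqE.
Qed.
Lemma mm_PNode s cs s' cs' k (c0 : unit * ptree S unit) : size cs = k ->
  mm (PNode s cs) (PNode s' cs') =
  ((s == s') * (size cs' == k) *
    \sum_(p : {perm 'I_k}) \prod_(i < k) mm (nth c0 cs i).2 (nth c0 cs' ((p^-1)%g i)).2)%N.
Proof.
move=> <-; rewrite /mm sym_list_PNode count_flatten -map_comp.
rewrite sumnE big_map big_enum /= big_distrr /=.
apply: eq_bigr => p _; rewrite count_map.
rewrite (@eq_in_count _ _ (fun ys => (s == s') && ((size cs' == size cs) && (ys == permute (p^-1)%g cs')))); last first.
  move=> ys /size_all_choices_in; rewrite size_map => E /=.
  by rewrite PNode_eq permute_eq.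
case: (s == s'); rewrite ?mul0n ?count_pred0 //.
case: (eqVneq (size cs') (size cs)) => E; last first.
  by rewrite muln0 mul0n; apply/eqP; rewrite -leqn0 leqNgt -has_count; apply/hasP => -[].
rewrite !mul1n (count_all_choices _ _ c0) /symF size_map size_permute // eqxx mul1n.
apply: eq_bigr => i _.
rewrite nth_permute // (nth_map c0) // count_pair_unit.
by [].
Qed.
Lemma mm_sym t t' : mm t t' = mm t' t.
Proof.
elim/ptree_ind2: t t' => s cs IH [s' cs'].
set c0 : unit * ptree S unit := (tt, PNode s [::]).
case: (eqVneq (size cs') (size cs)) => E; last first.
  rewrite (mm_PNode _ _ _ c0 erefl) (mm_PNode _ _ _ c0 erefl).
  have E1 : (size cs' == size cs) = false by apply/negbTE.
  have E2 : (size cs == size cs') = false by rewrite eq_sym.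
  by rewrite E1 E2 !muln0 !mul0n.
rewrite (mm_PNode _ _ _ c0 erefl) (mm_PNode _ _ _ c0 E) eqxx E eqxx eq_sym.
congr (_ * _)%N.
rewrite (reindex_inj invg_inj) /=; apply: eq_bigr => p _.
rewrite (reindex_inj (@perm_inj _ (p^-1)%g)) /=; apply: eq_bigr => i _.
rewrite invgK permKV IH //; apply/inseq_in; apply: mem_nth; rewrite -?E //.
Qed.
Lemma sz_PNode s cs k (c0 : unit * ptree S unit) : size cs = k ->
  sz (PNode s cs) = (k`! * \prod_(i < k) sz (nth c0 cs i).2)%N.
Proof.
move=> <-; rewrite /sz sym_list_PNode size_allpairs size_all_choices.
rewrite -cardE card_Sn; congr (_ * _)%N.
rewrite /symF big_map (big_nth c0) big_mkord; apply: eq_bigr => i _.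
by rewrite size_map.
Qed.
Lemma sz_gt0 t : (0 < sz t)%N.
Proof.
elim/ptree_ind2: t => s cs IH.
rewrite (sz_PNode _ (tt, PNode s [::]) erefl) muln_gt0 fact_gt0 /=.
rewrite prodn_gt0 // => i; apply: IH; apply/inseq_in; exact: mem_nth.
Qed.
Lemma prod_gt0_each (k : nat) (F : 'I_k -> nat) i :
  (0 < \prod_(j < k) F j)%N -> (0 < F i)%N.
Proof.
by rewrite (bigD1 i) //= muln_gt0 => /andP[].
Qed.
Lemma sum_gt0_ex (I : finType) (F : I -> nat) :
  (0 < \sum_(j : I) F j)%N -> exists j, (0 < F j)%N.
Proof.
case: (pickP (fun j => 0 < F j)%N) => [j Hj|H]; first by exists j.
by rewrite big1 // => j _; move: (H j); rewrite lt0n => /negbFE/eqP.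
Qed.
Lemma sz_eq t t' : (0 < mm t t')%N -> sz t = sz t'.
Proof.
elim/ptree_ind2: t t' => s cs IH [s' cs'].
set c0 : unit * ptree S unit := (tt, PNode s [::]).
rewrite (mm_PNode _ _ _ c0 erefl).
case: (s == s'); rewrite ?mul0n // mul1n.
case: (eqVneq (size cs') (size cs)) => E; rewrite ?mul0n // mul1n.
case/sum_gt0_ex => p Hp.
rewrite (sz_PNode _ c0 erefl) (sz_PNode _ c0 E); congr (_ * _)%N.
rewrite [RHS](reindex_inj (@perm_inj _ (p^-1)%g)) /=; apply: eq_bigr => i _.
apply: IH; first by apply/inseq_in; apply: mem_nth.
exact: (prod_gt0_each i Hp).
Qed.
End Comb.
Section Meas.
Variables (R : realType) (S : countType).
Variables (d : measure_display) (T : measurableType d) (P : probability T R).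
Variable Z : T -> ptree S R.
Hypothesis hZ : random_ltree Z.
Definition Ash n := [set w | enc (shape (Z w)) = n].
Lemma shapeEv_meas t : measurable (shapeEv Z t).
Proof.
have mT : forall (v : seq nat) (i : nat), measurable (@setT R) by move=> *; exact: measurableT.
pose B : seq nat -> nat -> set R := fun _ _ => setT.
have := @hZ t B mT.
congr measurable; apply/seteqP; split => w /=; rewrite /Eset /=.
  by case.
by move=> ->; split.
Qed.
Lemma Ash_enc t : Ash (enc t) = shapeEv Z t.
Proof. by apply/seteqP; split => w; rewrite /Ash /shapeEv /=; [move/enc_inj|move=> ->]. Qed.
Lemma Ash_none n : ~ (exists t : ptree S unit, enc t = n) -> Ash n = set0.
Proof. by move=> N; apply/seteqP; split => w //= E; apply: N; exists (shape (Z w)). Qed.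
Lemma Ash_meas n : measurable (Ash n).
Proof.
case: (pselect (exists t : ptree S unit, enc t = n)) => [[t <-]|N].
  by rewrite Ash_enc; exact: shapeEv_meas.
by rewrite Ash_none.
Qed.
Lemma int_Ash_enc (psi : ptree S unit -> R) t :
  (\int[P]_(w in Ash (enc t)) (psi (shape (Z w)))%:E = (psi t)%:E * P (shapeEv Z t))%E.
Proof.
rewrite Ash_enc (@eq_integral _ _ _ _ _ (fun _ => (psi t)%:E)); last first.
  by move=> w; rewrite inE /= => ->.
by rewrite integral_cst //; exact: shapeEv_meas.
Qed.
Lemma int_Ash_none (psi : ptree S unit -> R) n : ~ (exists t : ptree S unit, enc t = n) ->
  (\int[P]_(w in Ash n) (psi (shape (Z w)))%:E = 0)%E.
Proof. by move=> N; rewrite Ash_none // integral_set0. Qed.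
Lemma meas_shape_fun (psi : ptree S unit -> R) :
  measurable_fun [set: T] (fun w : T => ((psi (shape (Z w)))%:E : \bar R)).
Proof.
move=> _ Y mY; rewrite setTI.
have -> : (fun w => (psi (shape (Z w)))%:E) @^-1` Y =
    \bigcup_n (Ash n `&` (fun w => (psi (shape (Z w)))%:E) @^-1` Y).
  apply/seteqP; split => [w hw|w [n _ [_ hw]]] //.
  by exists (enc (shape (Z w))).
apply: bigcupT_measurable => n.
case: (pselect (exists t : ptree S unit, enc t = n)) => [[t <-]|N]; last by rewrite Ash_none // set0I.
case: (pselect (Y (psi t)%:E)) => hY.
  have -> : Ash (enc t) `&` (fun w => (psi (shape (Z w)))%:E) @^-1` Y = Ash (enc t).
    apply/seteqP; split => [w [] //|w hw]; split => //=.
    by move: hw => /enc_inj ->.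
  exact: Ash_meas.
have -> : Ash (enc t) `&` (fun w => (psi (shape (Z w)))%:E) @^-1` Y = set0.
  by apply/seteqP; split => [w [/= /enc_inj E]|//]; rewrite /preimage /= E.
exact: measurable0.
Qed.
Lemma int_decomp (psi : ptree S unit -> R) : (forall t, 0 <= psi t) ->
  (\int[P]_w (psi (shape (Z w)))%:E =
   \sum_(n <oo) \int[P]_(w in Ash n) (psi (shape (Z w)))%:E)%E.
Proof.
move=> psi0.
have E : [set: T] = \bigcup_n Ash n.
  by apply/seteqP; split => // w _; exists (enc (shape (Z w))).
rewrite E; apply: ge0_integral_bigcup.
- exact: Ash_meas.
- by rewrite -E; exact: meas_shape_fun.
- by move=> w _; rewrite lee_fin.
- by move=> i j _ _ [w [/= <- <-]].
Qed.
End Meas.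
Lemma int_shape_eq0 (R : realType) (S : countType)
  (d1 : measure_display) (T1 : measurableType d1) (P1 : probability T1 R) (Z1 : T1 -> ptree S R)
  (d2 : measure_display) (T2 : measurableType d2) (P2 : probability T2 R) (Z2 : T2 -> ptree S R) :
  random_ltree Z1 -> random_ltree Z2 ->
  (forall t, P1 (shapeEv Z1 t) = P2 (shapeEv Z2 t)) ->
  forall psi : ptree S unit -> R, (forall t, 0 <= psi t) ->
  (\int[P1]_w (psi (shape (Z1 w)))%:E = \int[P2]_w (psi (shape (Z2 w)))%:E)%E.
Proof.
move=> h1 h2 E psi psi0.
rewrite (int_decomp P1 h1 psi0) (int_decomp P2 h2 psi0).
apply: eq_eseriesr => n _.
case: (pselect (exists t : ptree S unit, enc t = n)) => [[t <-]|N].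
  by rewrite !int_Ash_enc // E.
by rewrite !int_Ash_none.
Qed.
Lemma int_shape_eq (R : realType) (S : countType)
  (d1 : measure_display) (T1 : measurableType d1) (P1 : probability T1 R) (Z1 : T1 -> ptree S R)
  (d2 : measure_display) (T2 : measurableType d2) (P2 : probability T2 R) (Z2 : T2 -> ptree S R) :
  random_ltree Z1 -> random_ltree Z2 ->
  (forall t, P1 (shapeEv Z1 t) = P2 (shapeEv Z2 t)) ->
  forall psi : ptree S unit -> R,
  (\int[P1]_w (psi (shape (Z1 w)))%:E = \int[P2]_w (psi (shape (Z2 w)))%:E)%E.
Proof.
move=> h1 h2 E psi.
rewrite integralE [in RHS]integralE.
have Hp (d : measure_display) (T : measurableType d) (Z : T -> ptree S R) :
    (fun w => (psi (shape (Z w)))%:E)^\+%E = (fun w => (Num.max (psi (shape (Z w))) 0)%:E).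
  by apply/funext => w; rewrite funeposE EFin_max.
have Hn (d : measure_display) (T : measurableType d) (Z : T -> ptree S R) :
    (fun w => (psi (shape (Z w)))%:E)^\-%E = (fun w => (Num.max (- psi (shape (Z w))) 0)%:E).
  by apply/funext => w; rewrite funenegE EFin_max.
rewrite !Hp !Hn.
congr (_ - _)%E.
  apply: (int_shape_eq0 (psi := fun t => Num.max (psi t) 0) h1 h2 E) => t.
  by rewrite le_max lexx orbT.
apply: (int_shape_eq0 (psi := fun t => Num.max (- psi t) 0) h1 h2 E) => t.
by rewrite le_max lexx orbT.
Qed.
Lemma sum_nat_eqk (a N : nat) : (\sum_(0 <= k < N) (a == k) = (a < N))%N.
Proof.
elim: N => [|N IH]; first by rewrite big_geq.
rewrite big_nat_recr //= IH.
rewrite (ltnS a N).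
by case: ltngtP.
Qed.
Lemma sum_count_f (A : Type) (f : A -> nat) N (L : seq A) :
  all (fun y => f y < N)%N L ->
  (\sum_(0 <= k < N) count (fun y => f y == k) L = size L)%N.
Proof.
elim: L => [_|y L IH /= /andP[hy hL]]; first by rewrite big1.
by rewrite big_split /= sum_nat_eqk hy IH.
Qed.
Lemma sum_indic_count (R : realType) (S : Type) (A : set (ptree S R)) (s : seq (ptree S R))
  (b : ptree S R -> bool) : (forall y, A y <-> b y) ->
  (\sum_(y <- s) \1_A y = (count b s)%:R :> R).
Proof.
move=> hA; elim: s => [|y s IH]; first by rewrite big_nil.
rewrite big_cons IH /= natrD indicE; congr (_ + _).
case: (boolP (b y)) => hb.
  by rewrite mem_set //; apply/hA.
by rewrite memNset // => /hA; apply/negP.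
Qed.
Lemma Eset_setT (R : realType) (S : Type) (t : ptree S unit) :
  Eset t (fun _ _ => @setT R) = [set y | shape y = t].
Proof. by apply/seteqP; split => y; rewrite /Eset /=; [case|move=> ->; split]. Qed.
Section Sym.
Variables (R : realType) (S : countType).
Variables (d : measure_display) (T : measurableType d) (P : probability T R) (X : T -> ptree S R).
Variables (d' : measure_display) (T' : measurableType d') (P' : probability T' R) (Y : T' -> ptree S R).
Hypothesis hX : valid_law P X.
Hypothesis hY : is_symmetrization P X P' Y.
Definition hh (t' t : ptree S unit) : R := (mm t t')%:R / (sz t)%:R.
Lemma sym_prob_hh (x : ptree S R) t' :
  sym_prob x t' (fun _ _ => @setT R) = hh t' (shape x).
Proof.
rewrite /sym_prob /hh (@sum_indic_count _ _ _ _ (fun y => shape y == t')); last first.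
  by move=> y; rewrite Eset_setT /=; split => [->|/eqP].
by rewrite /mm /sz -sym_list_shape count_map size_map.
Qed.
Definition cc (t' : ptree S unit) (n : nat) : R :=
  (count (fun y => enc y == n) (sym_list t'))%:R / (sz t')%:R.
Lemma cc_ge0 t' n : 0 <= cc t' n.
Proof. by rewrite /cc divr_ge0. Qed.
Lemma sum_cc t' : (\sum_(n <oo) (cc t' n)%:E = 1)%E.
Proof.
set L := sym_list t'.
set N := (\max_(y <- L) enc y).+1.
have hN : all (fun y => enc y < N)%N L.
  by apply/allP => y hy; rewrite ltnS; exact: (leq_bigmax_seq (F := @enc S) y hy).
rewrite (@nneseries_split _ _ 0 N); last by move=> k _; rewrite lee_fin cc_ge0.
rewrite add0n eseries0 ?adde0; last first.
  move=> i Ni _; rewrite /cc (eq_in_count (a2 := pred0)) ?count_pred0 ?mul0r //.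
  move=> y hy /=; apply/negbTE; move/allP: hN => /(_ y hy) h.
  by apply: contraTneq h => ->; rewrite -leqNgt.
rewrite sumEFin /cc -big_distrl /= -natr_sum sum_count_f // divff //.
by rewrite pnatr_eq0 -lt0n sz_gt0.
Qed.
Lemma sym_law t' : P' (shapeEv Y t') = P (shapeEv X t').
Proof.
case: hX => hXm [hinv _]; case: hY => hYm hs.
have mT : meas_family (fun (_ : seq nat) (_ : nat) => @setT R) by move=> *; exact: measurableT.
have -> : shapeEv Y t' = Y @^-1` Eset t' (fun _ _ => @setT R).
  by rewrite Eset_setT.
rewrite hs //.
rewrite (@eq_integral _ _ _ _ _ (fun w => (hh t' (shape (X w)))%:E)); last first.
  by move=> w _; rewrite sym_prob_hh.
rewrite int_decomp //; last by move=> t; rewrite /hh divr_ge0.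
set p' := P (shapeEv X t').
have fp : p' = (fine p')%:E.
  by rewrite fineK //; apply: fin_num_measure; exact: shapeEv_meas.
rewrite (@eq_eseriesr _ _ (fun n => (fine p')%:E * (cc t' n)%:E)%E); last first.
  move=> n _.
  case: (pselect (exists t : ptree S unit, enc t = n)) => [[t <-]|N].
    rewrite int_Ash_enc //.
    have ccE : cc t' (enc t) = (mm t' t)%:R / (sz t')%:R.
      by rewrite /cc /mm; congr (_%:R / _); apply: eq_count => y; rewrite (inj_eq (@enc_inj S)).
    case: (posnP (mm t t')) => hm.
      by rewrite /hh hm ccE mm_sym hm !mul0r mul0e mule0.
    rewrite /hh ccE mm_sym (sz_eq hm) -fp muleC.
    congr (_ * _)%E; apply: hinv; apply/inseq_in.
    by rewrite -has_pred1 has_count.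
  rewrite int_Ash_none // /cc (eq_count (a2 := pred0)) ?count_pred0 ?mul0r ?mule0 //.
  by move=> y /=; apply/negbTE/eqP => E; apply: N; exists y.
rewrite nneseriesZl; last by move=> n _; rewrite lee_fin cc_ge0.
by rewrite sum_cc mule1 -fp.
Qed.
End Sym.
Unset Implicit Arguments.
Theorem proposition3p6 (R : realType) (S : countType) (q : S)
    (dT : nat -> measure_display) (OT : forall n, measurableType (dT n))
    (PT : forall n, probability (OT n) R) (X : forall n, OT n -> ptree S R)
    (dY : nat -> measure_display) (OY : forall n, measurableType (dY n))
    (PY : forall n, probability (OY n) R) (Y : forall n, OY n -> ptree S R)
    (d0 : measure_display) (O0 : measurableType d0) (P0 : probability O0 R)
    (Lam : O0 -> R -> R) :
  (forall n, valid_law (PT n) (X n)) ->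
  (forall n, is_symmetrization (PT n) (X n) (PY n) (Y n)) ->
  C01_process Lam ->
  cvg_dist PY (fun n w => scaledLambda q (Y n w)) P0 Lam ->
  cvg_dist PT (fun n w => scaledLambda q (X n w)) P0 Lam.
Proof.
move=> hX hY _ hconv F hb hc.
have E : (fun n => \int[PT n]_w (F (scaledLambda q (X n w)))%:E)%E =
         (fun n => \int[PY n]_w (F (scaledLambda q (Y n w)))%:E)%E.
  apply/funext => n.
  rewrite (@eq_integral _ _ _ _ _ (fun w => (F (scaledLambda q (shape (X n w))))%:E)); last first.
    by move=> w _; rewrite Lambda_shape.
  rewrite [RHS](@eq_integral _ _ _ _ _ (fun w => (F (scaledLambda q (shape (Y n w))))%:E)); last first.
    by move=> w _; rewrite Lambda_shape.
  symmetry.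
  exact: (int_shape_eq (hY n).1 (hX n).1 (sym_law (hX n) (hY n)) (fun t => F (scaledLambda q t))).
by rewrite /= E; exact: hconv.
Qed.
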